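(* Let $B$ be a complete filtered BV algebra and $r\in F^1B$ odd. Define the operator $T(\exp(r)):B\to B$ by $$T(\exp(r))a=\exp\!\big(c(\exp(r))\big)\cdot\exp(r)a,$$ where $\exp(r)a=\sum_{k\ge0}\frac{\mathrm{ad}(r)^k a}{k!}$, $\mathrm{ad}(r)=\{r,\cdot\}$, $c(\exp(r))=\sum_{n\ge0}\frac{\mathrm{ad}(r)^n(\partial r)}{(n+1)!}$, and $\exp(c)=\sum_{m\ge0}c^m/m!$ is the exponential in the algebra $B$. Then $\partial\circ T(\exp(r))=T(\exp(r))\circ\partial$.
   Context: A BV algebra is a $\mathbb Z_2$-graded unital graded-commutative algebra $B$ (parity $\tilde a$) with an odd bracket $\{\cdot,\cdot\}$ making it an odd Poisson algebra ($\{a,b\}=-(-1)^{(\tilde a+1)(\tilde b+1)}\{b,a\}$, graded Jacobi for shifted parity, $\{a,bc\}=\{a,b\}c+(-1)^{(\tilde a+1)\tilde b}b\{a,c\}$), and an odd operator $\partial$ with $\partial^2=0$ and $(-1)^{\tilde a}\{a,b\}=-\partial(ab)+(\partial a)b+(-1)^{\tilde a}a(\partial b)$. ''Complete filtered'' means $B$ carries a descending filtration $B=F^0B\supseteq F^1B\supseteq\cdots$ by graded subspaces with $F^iF^j\subseteq F^{i+j}$, $\{F^i,F^j\}\subseteq F^{i+j}$, $\partial F^i\subseteq F^i$, and $B$ is complete with respect to it, so that all series converge. *)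

(* Defs.v *)
From mathcomp Require Import all_boot all_order all_algebra.
From Stdlib Require Import ClassicalEpsilon.
Set Implicit Arguments. Unset Strict Implicit. Unset Printing Implicit Defensive.
Import GRing.Theory.
Local Open Scope ring_scope.

Section BV.
Variables (K : fieldType) (B : algType K).

Definition sgn (n : nat) : B := (-1) ^+ n.

(* G p a : a is homogeneous of parity p (false = even, true = odd).
   F i a : a lies in the i-th filtration step F^i B.
   br    : the odd bracket {.,.};   d : the BV operator (partial). *)
Record complete_filtered_BV (G : bool -> B -> Prop) (F : nat -> B -> Prop)
    (br : B -> B -> B) (d : B -> B) : Prop := {
  G_0 : forall p, G p 0;
  G_add : forall p a b, G p a -> G p b -> G p (a + b);
  G_scale : forall p (k : K) a, G p a -> G p (k *: a);
  G_decomp : forall a, exists a0 a1, [/\ G false a0, G true a1 & a = a0 + a1];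
  G_direct : forall a, G false a -> G true a -> a = 0;
  G_one : G false 1;
  G_mul : forall p q a b, G p a -> G q b -> G (addb p q) (a * b);
  mul_gcomm : forall p q a b, G p a -> G q b ->
      a * b = sgn (p * q) * (b * a);
  br_addl : forall a b c, br (a + b) c = br a c + br b c;
  br_addr : forall a b c, br a (b + c) = br a b + br a c;
  br_scalel : forall (k : K) a b, br (k *: a) b = k *: br a b;
  br_scaler : forall (k : K) a b, br a (k *: b) = k *: br a b;
  G_br : forall p q a b, G p a -> G q b -> G (~~ addb p q) (br a b);
  br_skew : forall p q a b, G p a -> G q b ->
      br a b = - (sgn (p.+1 * q.+1) * br b a);
  br_jacobi : forall p q a b c, G p a -> G q b ->
      br a (br b c) = br (br a b) c + sgn (p.+1 * q.+1) * br b (br a c);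
  br_leibniz : forall p q a b c, G p a -> G q b ->
      br a (b * c) = br a b * c + sgn (p.+1 * q) * (b * br a c);
  d_add : forall a b, d (a + b) = d a + d b;
  d_scale : forall (k : K) a, d (k *: a) = k *: d a;
  G_d : forall p a, G p a -> G (~~ p) (d a);
  d_sq : forall a, d (d a) = 0;
  bv_rel : forall p a b, G p a ->
      sgn p * br a b = - d (a * b) + d a * b + sgn p * (a * d b);
  F_0 : forall a, F 0%N a;
  F_decr : forall i a, F i.+1 a -> F i a;
  F_zero : forall i, F i 0;
  F_add : forall i a b, F i a -> F i b -> F i (a + b);
  F_scale : forall i (k : K) a, F i a -> F i (k *: a);
  F_graded : forall i a, F i a -> exists a0 a1,
      [/\ G false a0, G true a1, F i a0, F i a1 & a = a0 + a1];
  F_mul : forall i j a b, F i a -> F j b -> F (i + j)%N (a * b);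
  F_br : forall i j a b, F i a -> F j b -> F (i + j)%N (br a b);
  F_d : forall i a, F i a -> F i (d a);
  F_sep : forall a, (forall i, F i a) -> a = 0;
  F_complete : forall u : nat -> B,
      (forall i, exists N, forall m n, (N <= m)%N -> (N <= n)%N -> F i (u m - u n)) ->
      exists L, forall i, exists N, forall n, (N <= n)%N -> F i (u n - L)
}.

Definition converges (F : nat -> B -> Prop) (u : nat -> B) (L : B) : Prop :=
  forall i, exists N, forall n, (N <= n)%N -> F i (u n - L).

Definition flim (F : nat -> B -> Prop) (u : nat -> B) : B :=
  epsilon (inhabits 0) (converges F u).

Definition fseries (F : nat -> B -> Prop) (t : nat -> B) : B :=
  flim F (fun n => \sum_(k < n) t k).

Definition exp_ad F br (r a : B) : B :=
  fseries F (fun k => (k`!%:R : K)^-1 *: iter k (br r) a).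

Definition c_exp F br (d : B -> B) (r : B) : B :=
  fseries F (fun n => ((n.+1)`!%:R : K)^-1 *: iter n (br r) (d r)).

Definition expB F (x : B) : B :=
  fseries F (fun m => (m`!%:R : K)^-1 *: x ^+ m).

Definition T_exp F br d (r a : B) : B :=
  expB F (c_exp F br d r) * exp_ad F br r a.

End BV.

(* Main.v *)
Require Import Defs.
From mathcomp Require Import all_boot all_order all_algebra ring.
From Stdlib Require Import ClassicalEpsilon FunctionalExtensionality Lia.
From mathcomp Require Import zify.
Set Implicit Arguments. Unset Strict Implicit. Unset Printing Implicit Defensive.
Import GRing.Theory.
Local Open Scope ring_scope.

Section Proof9.
Variables (K : fieldType) (B : algType K) (G : bool -> B -> Prop) (F : nat -> B -> Prop)
  (br : B -> B -> B) (d : B -> B).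
Hypothesis HB : complete_filtered_BV G F br d.

Lemma F_le i j a : (i <= j)%N -> F j a -> F i a.
Proof.
elim: j => [|j IH]; first by rewrite leqn0 => /eqP ->.
rewrite leq_eqVlt => /orP [/eqP -> //| ij] Fa.
apply: IH.
by rewrite -ltnS.
exact: (F_decr HB Fa).
Qed.

Lemma F_opp i a : F i a -> F i (- a).
Proof. by move=> Fa; rewrite -scaleN1r; apply: (F_scale HB). Qed.

Lemma F_sub i a b : F i a -> F i b -> F i (a - b).
Proof. by move=> Fa Fb; apply: (F_add HB) => //; apply: F_opp. Qed.

Lemma F_sum i n (t : 'I_n -> B) : (forall k, F i (t k)) -> F i (\sum_(k < n) t k).
Proof.
move=> H; apply: (big_ind (F i)); first exact: (F_zero HB).
  by move=> x y; apply: (F_add HB).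
by move=> k _.
Qed.

Lemma F_muln i a n : F i a -> F i (a *+ n).
Proof. by move=> Fa; rewrite -scaler_nat; apply: (F_scale HB). Qed.

Lemma G_opp p a : G p a -> G p (- a).
Proof. by move=> Ga; rewrite -scaleN1r; apply: (G_scale HB). Qed.

Definition psum (t : nat -> B) n := \sum_(k < n) t k.
Definition null (t : nat -> B) := forall i, exists N, forall n, (N <= n)%N -> F i (t n).
Definition graded (t : nat -> B) := forall n, F n (t n).

Lemma graded_null t : graded t -> null t.
Proof. by move=> g i; exists i => n iN; apply: F_le iN (g n). Qed.

Lemma null_shift t : null t -> null (fun n => t n.+1).
Proof. by move=> H i; case: (H i) => N HN; exists N => n nN; apply: HN; apply: leqW. Qed.

Lemma null_unshift t : null (fun n => t n.+1) -> null t.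
Proof. by move=> H i; case: (H i) => N HN; exists N.+1; case=> // n nN; apply: HN. Qed.

Lemma psum_diff i k n t : (forall j, (k <= j)%N -> F i (t j)) -> (k <= n)%N ->
  F i (psum t n - psum t k).
Proof.
move=> H; elim: n => [|n IH]; first by rewrite leqn0 => /eqP ->; rewrite subrr; apply: (F_zero HB).
rewrite leq_eqVlt => /orP [/eqP ->| kn]; first by rewrite subrr; apply: (F_zero HB).
rewrite /psum big_ord_recr /= addrAC; apply: (F_add HB); first exact: IH.
exact: H.
Qed.

Lemma subr_sub (a b c : B) : a - b = (c - b) - (c - a).
Proof. by rewrite opprB (addrC (c - b)) addrA subrK. Qed.

Lemma subr_sub2 (a b c : B) : a - b = (a - c) - (b - c).
Proof. by rewrite opprB addrA subrK. Qed.

Lemma cvg_unique u L L' : converges F u L -> converges F u L' -> L = L'.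
Proof.
move=> H1 H2; apply/eqP; rewrite -subr_eq0; apply/eqP; apply: (F_sep HB) => i.
case: (H1 i) => N1 h1; case: (H2 i) => N2 h2.
rewrite (subr_sub L L' (u (maxn N1 N2))).
by apply: F_sub; [apply: h2; apply: leq_maxr | apply: h1; apply: leq_maxl].
Qed.

Lemma null_cvg t : null t -> converges F (psum t) (fseries F t).
Proof.
move=> H; rewrite /fseries /flim; apply: epsilon_spec.
apply: (F_complete HB) => i; case: (H i) => N HN; exists N => m n mN nN.
rewrite (subr_sub2 (psum t m) (psum t n) (psum t N)).
by apply: F_sub; apply: psum_diff.
Qed.

Lemma S_eq t L : null t -> converges F (psum t) L -> fseries F t = L.
Proof. by move=> H; apply: cvg_unique; apply: null_cvg. Qed.

Lemma S_ext t u : t =1 u -> fseries F t = fseries F u.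
Proof. by move=> e; congr fseries; apply: functional_extensionality. Qed.

Lemma cvg_ext u v L : u =1 v -> converges F u L -> converges F v L.
Proof. by move=> e H i; case: (H i) => N HN; exists N => n nN; rewrite -e; apply: HN. Qed.

Lemma cvg_add u v L M : converges F u L -> converges F v M ->
  converges F (fun n => u n + v n) (L + M).
Proof.
move=> H1 H2 i; case: (H1 i) => N1 h1; case: (H2 i) => N2 h2.
exists (maxn N1 N2) => n nN; rewrite opprD addrACA; apply: (F_add HB).
  by apply: h1; apply: leq_trans nN; apply: leq_maxl.
by apply: h2; apply: leq_trans nN; apply: leq_maxr.
Qed.

Lemma cvg_const x : converges F (fun _ => x) x.
Proof. by move=> i; exists 0%N => n _; rewrite subrr; apply: (F_zero HB). Qed.

Lemma cvg_unshift u L : converges F (fun n => u n.+1) L -> converges F u L.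
Proof. by move=> H i; case: (H i) => N HN; exists N.+1; case=> // n nN; apply: HN. Qed.

Lemma null_add t u : null t -> null u -> null (fun n => t n + u n).
Proof.
move=> H1 H2 i; case: (H1 i) => N1 h1; case: (H2 i) => N2 h2.
exists (maxn N1 N2) => n nN; apply: (F_add HB).
  by apply: h1; apply: leq_trans nN; apply: leq_maxl.
by apply: h2; apply: leq_trans nN; apply: leq_maxr.
Qed.

Lemma S_add t u : null t -> null u ->
  fseries F (fun n => t n + u n) = fseries F t + fseries F u.
Proof.
move=> Ht Hu; apply: S_eq; first exact: null_add.
apply: cvg_ext (cvg_add (null_cvg Ht) (null_cvg Hu)) => n.
by rewrite /psum big_split.
Qed.

Lemma S_shift t : null t -> fseries F t = t 0%N + fseries F (fun n => t n.+1).
Proof.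
move=> Ht; apply: S_eq => //; apply: cvg_unshift.
apply: cvg_ext (cvg_add (cvg_const (t 0%N)) (null_cvg (null_shift Ht))) => n.
by rewrite /psum big_ord_recl.
Qed.

Section Map.
Variable f : B -> B.
Hypothesis fadd : forall a b, f (a + b) = f a + f b.
Hypothesis fF : forall i a, F i a -> F i (f a).

Lemma f0 : f 0 = 0.
Proof. by apply: (addrI (f 0)); rewrite -fadd !addr0. Qed.

Lemma fN a : f (- a) = - f a.
Proof. by apply/eqP; rewrite -addr_eq0 -fadd addNr f0. Qed.

Lemma fB a b : f (a - b) = f a - f b.
Proof. by rewrite fadd fN. Qed.

Lemma f_sum n (t : 'I_n -> B) : f (\sum_(k < n) t k) = \sum_(k < n) f (t k).
Proof. exact: (big_morph f fadd f0). Qed.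

Lemma null_map t : null t -> null (fun n => f (t n)).
Proof. by move=> H i; case: (H i) => N HN; exists N => n nN; apply: fF; apply: HN. Qed.

Lemma S_map t : null t -> f (fseries F t) = fseries F (fun n => f (t n)).
Proof.
move=> Ht; symmetry; apply: S_eq; first exact: null_map.
move=> i; case: (null_cvg Ht i) => N HN; exists N => n nN.
by rewrite /psum -f_sum -fB; apply: fF; apply: HN.
Qed.
End Map.

Lemma telesc3 (x y z w : B) : (x - y) + ((y - z) + (z - w)) = x - w.
Proof. by rewrite !subrKA. Qed.

Lemma psumS t n : psum t n.+1 = psum t n + t n.
Proof. by rewrite /psum big_ord_recr. Qed.

Lemma psum0 t : psum t 0 = 0.
Proof. by rewrite /psum big_ord0. Qed.

Section Bilin.
Variable m : B -> B -> B.
Hypothesis mDl : forall a b c, m (a + b) c = m a c + m b c.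
Hypothesis mDr : forall a b c, m a (b + c) = m a b + m a c.
Hypothesis mF : forall i j a b, F i a -> F j b -> F (i + j) (m a b).

Definition conv (t u : nat -> B) n := \sum_(i < n.+1) m (t i) (u (n - i)%N).

Lemma m0r a : m a 0 = 0.
Proof. exact: (f0 (mDr a)). Qed.

Lemma mBr a b c : m a (b - c) = m a b - m a c.
Proof. exact: (fB (mDr a)). Qed.

Lemma mBl a b c : m (a - b) c = m a c - m b c.
Proof. exact: (fB (fun x y => mDl x y c)). Qed.

Lemma m_suml n (t : 'I_n -> B) c : m (\sum_(k < n) t k) c = \sum_(k < n) m (t k) c.
Proof. exact: (f_sum (fun x y => mDl x y c)). Qed.

Lemma conv_psum t u n : psum (conv t u) n = \sum_(i < n) m (t i) (psum u (n - i)%N).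
Proof.
elim: n => [|n IH]; first by rewrite psum0 big_ord0.
rewrite psumS IH /conv.
rewrite [RHS](eq_bigr (fun i : 'I_n.+1 => m (t i) (psum u (n - i)%N) + m (t i) (u (n - i)%N))); last first.
  move=> i _; have hi : (i <= n)%N by rewrite -ltnS.
  by rewrite (subSn hi) psumS mDr.
by rewrite big_split /= [X in _ = X + _]big_ord_recr /= subnn psum0 m0r addr0.
Qed.

Lemma conv_graded t u : graded t -> graded u -> graded (conv t u).
Proof.
move=> gt gu n; apply: F_sum => i.
have hi : (i <= n)%N by rewrite -ltnS.
by rewrite -{1}(subnKC hi); apply: mF.
Qed.

Lemma cauchy t u : graded t -> graded u ->
  m (fseries F t) (fseries F u) = fseries F (conv t u).
Proof.
move=> gt gu; symmetry; apply: S_eq; first exact/graded_null/conv_graded.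
have ct := null_cvg (graded_null gt); have cu := null_cvg (graded_null gu).
set St := fseries F t; set Su := fseries F u.
move=> i; case: (ct i) => N1 h1; case: (cu i) => N2 h2.
exists (maxn i (maxn N1 N2)) => n nN.
have hi : (i <= n)%N by apply: leq_trans nN; apply: leq_maxl.
have hN : (maxn N1 N2 <= n)%N by apply: leq_trans nN; apply: leq_maxr.
rewrite -(telesc3 (psum (conv t u) n) (m (psum t n) (psum u n)) (m St (psum u n)) (m St Su)).
rewrite -mBl -mBr; apply: (F_add HB); last apply: (F_add HB).
- apply: (F_le hi); rewrite -opprB; apply: F_opp.
  rewrite conv_psum /psum m_suml -sumrB; apply: F_sum => k.
  rewrite -mBr -/(psum u n) -/(psum u (n - k)%N).
  have hk : (k <= n)%N := ltnW (ltn_ord k).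
  rewrite -{1}(subnKC hk); apply: mF; first exact: gt.
  apply: psum_diff; last exact: leq_subr.
  by move=> j hj; apply: (F_le hj).
- rewrite -(addn0 i); apply: mF; last exact: (F_0 HB).
  by apply: h1; apply: leq_trans hN; apply: leq_maxl.
- rewrite -(add0n i); apply: mF; first exact: (F_0 HB).
  by apply: h2; apply: leq_trans hN; apply: leq_maxr.
Qed.
End Bilin.

Lemma sgn0 : sgn B 0 = 1.
Proof. by rewrite /sgn expr0. Qed.
Lemma sgn1 : sgn B 1 = -1.
Proof. by rewrite /sgn expr1. Qed.
Lemma sgnT (q : bool) : sgn B (true.+1 * q.+1) = 1.
Proof. by rewrite /sgn -signr_odd; case: q. Qed.

Lemma d0 : d 0 = 0.
Proof. exact: (f0 (d_add HB)). Qed.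
Lemma dN a : d (- a) = - d a.
Proof. exact: (fN (d_add HB)). Qed.
Lemma dB a b : d (a - b) = d a - d b.
Proof. exact: (fB (d_add HB)). Qed.
Lemma d_sum n (t : 'I_n -> B) : d (\sum_(k < n) t k) = \sum_(k < n) d (t k).
Proof. exact: (f_sum (d_add HB)). Qed.
Lemma d_muln a n : d (a *+ n) = d a *+ n.
Proof. by rewrite -!scaler_nat (d_scale HB). Qed.

Lemma br0r a : br a 0 = 0.
Proof. exact: (f0 (br_addr HB a)). Qed.
Lemma br0l a : br 0 a = 0.
Proof. exact: (f0 (fun x y => br_addl HB x y a)). Qed.
Lemma brBr a b c : br a (b - c) = br a b - br a c.
Proof. exact: (fB (br_addr HB a)). Qed.
Lemma brBl a b c : br (a - b) c = br a c - br b c.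
Proof. exact: (fB (fun x y => br_addl HB x y c)). Qed.
Lemma brNr a b : br a (- b) = - br a b.
Proof. exact: (fN (br_addr HB a)). Qed.
Lemma br_sumr n (t : 'I_n -> B) a : br a (\sum_(k < n) t k) = \sum_(k < n) br a (t k).
Proof. exact: (f_sum (br_addr HB a)). Qed.
Lemma br_mulnr a b n : br a (b *+ n) = br a b *+ n.
Proof. by rewrite -!scaler_nat (br_scaler HB). Qed.

Lemma zsolve (a b c : B) : b = - a + c -> a = c - b.
Proof. by move->; rewrite opprD opprK addrCA subrr addr0. Qed.

Lemma d_mul_even x w : G false x -> d (x * w) = d x * w + x * d w - br x w.
Proof.
move=> Gx; have := bv_rel HB w Gx; rewrite sgn0 !mul1r => h.
by apply: zsolve; rewrite h addrA.
Qed.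

Lemma d_mul_odd x w : G true x -> d (x * w) = d x * w - x * d w + br x w.
Proof.
move=> Gx; have := bv_rel HB w Gx; rewrite sgn1 !mulN1r => h.
have h' : br x w = d (x * w) - d x * w + x * d w.
  by rewrite -[br x w]opprK h !opprD !opprK.
by rewrite h' addrCA !subrK.
Qed.

Section R.
Variable r : B.
Hypothesis r_odd : G true r.
Hypothesis r_F1 : F 1 r.
Hypothesis charK : [pchar K] =i pred0.

Local Notation s := (d r).
Local Notation Dr k x := (iter k (br r) x).

Lemma s_even : G false s.
Proof. exact: (G_d HB r_odd). Qed.

Lemma ds : d s = 0.
Proof. exact: (d_sq HB). Qed.

Lemma s_F1 : F 1 s.
Proof. exact: (F_d HB r_F1). Qed.

Lemma D_G p a k : G p a -> G p (Dr k a).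
Proof.
move=> Ga; elim: k => [|k IH] //=.
by have := G_br HB r_odd IH; case: p {Ga IH}.
Qed.

Lemma D_F i a k : F i a -> F (k + i) (Dr k a).
Proof.
move=> Fa; elim: k => [|k IH] //=.
by rewrite addSn -add1n; apply: (F_br HB r_F1 IH).
Qed.

Lemma D_0 k : Dr k 0 = 0.
Proof. by elim: k => [|k IH] //=; rewrite IH br0r. Qed.

Lemma dD b : d (br r b) = br s b + br r (d b).
Proof.
have e1 : d (r * b) = s * b - r * d b + br r b by apply: d_mul_odd.
have e2 : d (s * b) = s * d b - br s b.
  by rewrite (d_mul_even _ s_even) ds mul0r add0r.
have e3 : d (r * d b) = s * d b + br r (d b).
  by rewrite (d_mul_odd _ r_odd) (d_sq HB) mulr0 subr0.
have := congr1 d e1; rewrite (d_sq HB) !(d_add HB) dN e2 e3.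
move/eqP; rewrite eq_sym addrC addr_eq0 => /eqP ->.
by rewrite opprB (addrC (s * d b)) addrKA opprK addrC.
Qed.

Lemma D_der x y : G false x -> br r (br x y) = br (br r x) y + br x (br r y).
Proof. by move=> Gx; rewrite (br_jacobi HB y r_odd Gx) sgnT mul1r. Qed.

Lemma d_Dk k a : d (Dr k a) = Dr k (d a) +
  \sum_(i < k) br (Dr i s) (Dr (k - i.+1)%N a) *+ 'C(k, i.+1).
Proof.
elim: k => [|k IH]; first by rewrite big_ord0 addr0.
rewrite [Dr k.+1 a]/= dD IH (br_addr HB) br_sumr.
rewrite (eq_bigr (fun i : 'I_k => (br (Dr i.+1 s) (Dr (k - i.+1)%N a) +
   br (Dr i s) (Dr (k - i)%N a)) *+ 'C(k, i.+1))); last first.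
  move=> i _; rewrite br_mulnr D_der; last exact: D_G s_even.
  by rewrite -[br r (Dr _ a)]/(Dr (k - i.+1).+1 a) subnSK.
rewrite [in RHS](eq_bigr (fun i : 'I_k.+1 => br (Dr i s) (Dr (k - i)%N a) *+ 'C(k, i.+1) +
   br (Dr i s) (Dr (k - i)%N a) *+ 'C(k, i))); last first.
  by move=> i _; rewrite subSS binS mulrnDr.
rewrite big_split /= big_ord_recr /= bin_small // mulr0n addr0.
rewrite big_ord_recl /= bin0 mulr1n subn0.
rewrite (eq_bigr _ (fun i _ => mulrnDl _ _ _)) big_split /=.
have -> : \sum_(i < k) br (br r (Dr (0 + i) s)) (Dr (k - bump 0 i) a) *+ 'C(k, bump 0 i)
   = \sum_(i < k) br (br r (Dr i s)) (Dr (k - i.+1) a) *+ 'C(k, i.+1).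
  by apply: eq_bigr => i _; rewrite add0n /bump leq0n add1n.
rewrite [LHS]addrCA; congr (_ + _).
by rewrite addrA addrC.
Qed.

Lemma natf_neq0 n : (0 < n)%N -> (n%:R : K) != 0.
Proof. by rewrite ((pcharf0P K).1 charK) -lt0n. Qed.

Lemma fact_neq0 n : (n`!%:R : K) != 0.
Proof. exact/natf_neq0/fact_gt0. Qed.

Lemma sc1 n i : (i <= n)%N ->
  (((n.+1)`!%:R : K)^-1 * ('C(n.+1, i.+1))%:R) = ((i.+1)`!%:R)^-1 * ((n - i)`!%:R)^-1.
Proof.
move=> hi; have h := bin_fact (hi : (i.+1 <= n.+1)%N); rewrite subSS in h.
have hC : ('C(n.+1, i.+1)%:R : K) != 0 by apply/natf_neq0; rewrite bin_gt0.
rewrite -h (natrM _ 'C(n.+1,i.+1)) (natrM _ (i.+1)`!).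
by rewrite invfM mulrC mulrA mulfV // mul1r invfM.
Qed.

Definition ea a k := ((k`!%:R : K)^-1 *: Dr k a).
Definition cterm k := (((k.+1)`!%:R : K)^-1 *: Dr k s).

Lemma ea_graded a : graded (ea a).
Proof. by move=> k; apply: (F_scale HB); rewrite -[X in F X _]addn0; apply: D_F; apply: (F_0 HB). Qed.

Lemma cterm_F1 k : F k.+1 (cterm k).
Proof. by apply: (F_scale HB); rewrite -[X in F X _]addn1; apply: D_F; apply: s_F1. Qed.

Lemma cterm_graded : graded cterm.
Proof. by move=> k; apply: (F_decr HB (cterm_F1 k)). Qed.

Local Notation c := (c_exp F br d r).
Local Notation E a := (exp_ad F br r a).

Lemma dE a : d (E a) = E (d a) + br c (E a).
Proof.
rewrite /exp_ad (S_map (d_add HB) (F_d HB)); last exact/graded_null/ea_graded.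
set t2 := fun k => ((k`!%:R : K)^-1 *: \sum_(i < k) br (Dr i s) (Dr (k - i.+1)%N a) *+ 'C(k, i.+1)).
rewrite (S_ext (u := fun k => ea (d a) k + t2 k)); last first.
  by move=> k; rewrite (d_scale HB) d_Dk scalerDr.
have nt2 : null t2.
  apply: graded_null => k; apply: (F_scale HB); apply: F_sum => i; apply: F_muln.
  have hi : (i.+1 <= k)%N := ltn_ord i.
  rewrite -{1}(subnKC hi); apply: (F_br HB); last by rewrite -[X in F X _]addn0; apply: D_F; apply: (F_0 HB).
  by rewrite -addn1; apply: D_F; apply: s_F1.
rewrite S_add //; last exact/graded_null/ea_graded.
congr (_ + _).
rewrite S_shift // {1}/t2 big_ord0 scaler0 add0r.
rewrite /c_exp (cauchy (br_addl HB) (br_addr HB) (F_br HB) cterm_graded (ea_graded a)).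
apply: S_ext => k; rewrite /t2 /conv scaler_sumr; apply: eq_bigr => i _.
have hi : (i <= k)%N by rewrite -ltnS.
rewrite subSS -scaler_nat scalerA /cterm /ea (br_scalel HB) (br_scaler HB) scalerA.
by rewrite sc1.
Qed.

Lemma c_F1 : F 1 c.
Proof.
have cv := null_cvg (graded_null cterm_graded).
case: (cv 1%N) => N HN.
rewrite -[c](subKr (psum cterm N)); apply: F_sub; last by apply: HN.
by apply: F_sum => k; apply: (F_le _ (cterm_F1 k)).
Qed.

Lemma c_even : G false c.
Proof.
have cv := null_cvg (graded_null cterm_graded).
have GP : forall n, G false (psum cterm n).
  move=> n; apply: (big_ind (G false)); first exact: (G_0 HB).
    by move=> x y; apply: (G_add HB).
  by move=> k _; apply: (G_scale HB); apply: D_G s_even.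
case: (G_decomp HB c) => c0 [c1 [Gc0 Gc1 ec]].
suff c10 : c1 = 0 by rewrite ec c10 addr0.
apply: (F_sep HB) => i; case: (cv i) => N HN.
case: (F_graded HB (HN N (leqnn N))) => z0 [z1 [Gz0 Gz1 Fz0 Fz1 ez]].
have {}ez : psum cterm N - (c0 + c1) = z0 + z1 by rewrite -ec; exact: ez.
have ew : c1 + z1 = psum cterm N - c0 - z0.
  move: ez; set P := psum cterm N => e.
  by rewrite -[P](subrK (c0 + c1)) e addrACA addrAC addrK (addrC z0) addrK addrC.
have w0 : c1 + z1 = 0.
  apply: (G_direct HB); last by apply: (G_add HB).
  rewrite ew; apply: (G_add HB); last exact: G_opp.
  by apply: (G_add HB); [exact: GP | exact: G_opp].
by rewrite -[c1](addrK z1) w0 sub0r; apply: F_opp.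
Qed.

Lemma br_sym_even x y : G false x -> G false y -> br x y = br y x.
Proof. by move=> Gx Gy; rewrite (br_skew HB Gx Gy) sgn1 mulN1r opprK. Qed.

Lemma sc2 n i : (i <= n)%N ->
  ((n.+2)`!%:R : K)^-1 * ('C(n.+1, i.+1))%:R +
  ((n.+2)`!%:R : K)^-1 * ('C(n.+1, (n - i).+1))%:R =
  ((i.+1)`!%:R)^-1 * (((n - i).+1)`!%:R)^-1.
Proof.
move=> hi; rewrite [(n.+2)`!]factS natrM invfM -!mulrA sc1 // sc1 ?leq_subr // subKn //.
rewrite [(i.+1)`!]factS [((n - i).+1)`!]factS !natrM.
have ea : ((n.+2)%:R : K) = (i.+1)%:R + ((n - i).+1)%:R.
  by rewrite -natrD; congr (_%:R); rewrite addSn addnS subnKC.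
rewrite ea.
have h1 : ((i.+1)%:R : K) != 0 by apply: natf_neq0.
have h2 : (((n - i).+1)%:R : K) != 0 by apply: natf_neq0.
have h3 : ((i.+1)%:R + ((n - i).+1)%:R : K) != 0 by rewrite -natrD; apply: natf_neq0.
move: h1 h2 h3 (fact_neq0 i) (fact_neq0 (n - i)).
set I := ((i.+1)%:R : K); set J := (((n - i).+1)%:R : K).
set fi := (i`!%:R : K); set fj := ((n - i)`!%:R : K).
clearbody I J fi fj => h1 h2 h3 h4 h5.
by field; rewrite h1 h2 h3 h4 h5.
Qed.

Lemma dc : d c + d c = br c c.
Proof.
rewrite {1 2}/c_exp (S_map (d_add HB) (F_d HB)); last exact/graded_null/cterm_graded.
set t3 := fun k => (((k.+1)`!%:R : K)^-1 *: \sum_(i < k) br (Dr i s) (Dr (k - i.+1)%N s) *+ 'C(k, i.+1)).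
rewrite (S_ext (u := t3)); last first.
  by move=> k; rewrite /cterm (d_scale HB) d_Dk ds D_0 add0r.
have nt3 : null t3.
  apply: graded_null => k; apply: (F_scale HB); apply: F_sum => i; apply: F_muln.
  have hi : (i.+1 <= k)%N := ltn_ord i.
  rewrite -{1}(subnKC hi); apply: (F_br HB); last by rewrite -[X in F X _]addn0; apply: D_F; apply: (F_0 HB).
  by rewrite -[X in F X _]addn1; apply: D_F; apply: s_F1.
have t30 : t3 0%N = 0 by rewrite /t3 big_ord0 scaler0.
rewrite S_shift // t30 add0r.
rewrite -S_add; try exact: null_shift.
rewrite /c_exp (cauchy (br_addl HB) (br_addr HB) (F_br HB) cterm_graded cterm_graded).
apply: S_ext => n; rewrite /t3 /conv.
have Gg : forall j, G false (Dr j s) by move=> j; apply: D_G s_even.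
set g := fun i : nat => br (Dr i s) (Dr (n - i)%N s).
set al := fun i : nat => (((n.+2)`!%:R : K)^-1 * ('C(n.+1, i.+1))%:R).
have eX : ((n.+2)`!%:R : K)^-1 *: \sum_(i < n.+1) br (Dr i s) (Dr (n.+1 - i.+1)%N s) *+ 'C(n.+1, i.+1)
   = \sum_(i < n.+1) al i *: g i.
  by rewrite scaler_sumr; apply: eq_bigr => i _; rewrite subSS -scaler_nat scalerA.
rewrite eX.
have eR : \sum_(i < n.+1) al i *: g i = \sum_(i < n.+1) al (n - i)%N *: g i.
  rewrite (reindex_inj rev_ord_inj) /=; apply: eq_bigr => i _.
  have hi : (i <= n)%N by rewrite -ltnS.
  rewrite subSS; congr (_ *: _); rewrite /g subKn //.
  by apply: br_sym_even.
rewrite [X in X + _]eR -big_split /=; apply: eq_bigr => i _.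
have hi : (i <= n)%N by rewrite -ltnS.
rewrite -scalerDl /cterm (br_scalel HB) (br_scaler HB) scalerA /al.
by rewrite addrC sc2.
Qed.

Lemma lin6 (P Z X Y W1 W2 : B) : Z + (P + Y - W1) - (W2 + X) = P + ((Z - X) + Y) - (W1 + W2).
Proof.
rewrite addrCA -!addrA; congr (_ + _); rewrite opprD (addrC W1) !opprD.
rewrite [LHS]addrCA; congr (_ + _); rewrite [RHS]addrCA; congr (_ + _).
by rewrite [LHS]addrC -addrA [RHS]addrCA.
Qed.

Local Notation u := (d c).

Lemma u_odd : G true u.
Proof. exact: (G_d HB c_even). Qed.

Lemma cexpG m : G false (c ^+ m).
Proof.
elim: m => [|m IH]; first by rewrite expr0; apply: (G_one HB).
by rewrite exprS; apply: (G_mul HB c_even IH).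
Qed.

Lemma cexpF m : F m (c ^+ m).
Proof.
elim: m => [|m IH]; first by rewrite expr0; apply: (F_0 HB).
by rewrite exprS -add1n; apply: (F_mul HB c_F1 IH).
Qed.

Lemma u_comm m : u * c ^+ m = c ^+ m * u.
Proof. by rewrite (mul_gcomm HB u_odd (cexpG m)) /sgn -signr_odd /= mul1r. Qed.

Lemma br_c1 : br c 1 = 0.
Proof.
have h := br_leibniz HB 1 c_even (G_one HB).
rewrite !mulr1 /sgn -signr_odd /= !mul1r in h.
by apply: (addrI (br c 1)); rewrite addr0 -h.
Qed.

Lemma brc_cmS m : br c (c ^+ m.+1) = (c ^+ m * (u + u)) *+ m.+1.
Proof.
elim: m => [|m IH]; first by rewrite expr1 expr0 mul1r mulr1n dc.
rewrite [c ^+ m.+2]exprS (br_leibniz HB _ c_even c_even) /sgn -signr_odd /= mul1r.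
rewrite IH -dc mulrDl !u_comm -mulrDr mulrnAr mulrA -exprS.
by rewrite [in RHS]mulrS.
Qed.

Lemma brc_cm m : br c (c ^+ m) = (c ^+ m.-1 * (u + u)) *+ m.
Proof. by case: m => [|m]; [rewrite expr0 br_c1 mulr0n | exact: brc_cmS]. Qed.

Lemma cpred k v : (c * (c ^+ k.-1 * v)) *+ k = (c ^+ k * v) *+ k.
Proof. by case: k => [|k]; rewrite ?mulr0n // mulrA -exprS. Qed.

Lemma d_cmx m x : d (c ^+ m * x) = c ^+ m * d x +
  (c ^+ m.-1 * (u * x - br c x)) *+ m - (c ^+ m.-2 * (u * x)) *+ (m * m.-1).
Proof.
elim: m => [|m IH]; first by rewrite expr0 !mul1r mulr0n mul0n mulr0n subr0 addr0.
have h1 : u * (c ^+ m * x) = c ^+ m * (u * x) by rewrite mulrA u_comm -mulrA.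
have h2 : c * (c ^+ m * d x + (c ^+ m.-1 * (u * x - br c x)) *+ m - (c ^+ m.-2 * (u * x)) *+ (m * m.-1))
   = c ^+ m.+1 * d x + (c ^+ m * (u * x - br c x)) *+ m - (c ^+ m.-1 * (u * x)) *+ (m.-1 * m).
  by rewrite mulrBr mulrDr [c * (c ^+ m * d x)]mulrA -exprS !mulrnAr cpred mulnC !mulrnA cpred.
have h3 : br c (c ^+ m * x) = (c ^+ m.-1 * (u * x)) *+ (2 * m) + c ^+ m * br c x.
  rewrite (br_leibniz HB x c_even (cexpG m)) /sgn -signr_odd /= mul1r brc_cm.
  by rewrite mulrnAl -mulrA mulrDl -mulr2n mulrnAr -mulrnA.
have h4 : (c ^+ m * (u * x - br c x)) *+ m.+1 = (c ^+ m * (u * x) - c ^+ m * br c x)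
   + (c ^+ m * (u * x - br c x)) *+ m by rewrite mulrS mulrBr.
have en : (m.+1 * m = m.-1 * m + 2 * m)%N by case: m {IH h1 h2 h3 h4} => // m; rewrite /= !mulSn; lia.
have h5 : (c ^+ m.-1 * (u * x)) *+ (m.+1 * m) = (c ^+ m.-1 * (u * x)) *+ (m.-1 * m)
   + (c ^+ m.-1 * (u * x)) *+ (2 * m) by rewrite en mulrnDr.
rewrite [in d _]exprS -[(c * c ^+ m) * x]mulrA (d_mul_even _ c_even) IH h1 h2 h3 h4 h5.
by apply: lin6.
Qed.

Lemma sc3 m : ((m.+1)`!%:R : K)^-1 * (m.+1)%:R = (m`!%:R)^-1.
Proof.
rewrite factS natrM invfM mulrAC mulVf ?mul1r //.
exact: natf_neq0.
Qed.

Lemma e_graded : graded (fun m => ((m`!%:R : K)^-1 *: c ^+ m)).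
Proof. by move=> m; apply: (F_scale HB); apply: cexpF. Qed.

Lemma null_mulr t y : null t -> null (fun n => t n * y).
Proof.
move=> H i; case: (H i) => N HN; exists N => n nN.
by rewrite -[i]addn0; apply: (F_mul HB (HN n nN) (F_0 HB y)).
Qed.

Lemma S_mulr t y : null t -> fseries F t * y = fseries F (fun n => t n * y).
Proof.
apply: (S_map (fun a b => mulrDl a b y)) => i a Fa.
by rewrite -[i]addn0; apply: (F_mul HB Fa (F_0 HB y)).
Qed.

Lemma S_opp t : null t -> fseries F (fun n => - t n) = - fseries F t.
Proof. by move=> Ht; rewrite (S_map (f := fun a => - a) (@opprD _) F_opp). Qed.

Lemma null_ext t t' : t =1 t' -> null t -> null t'.
Proof. by move=> e H i; case: (H i) => N HN; exists N => n nN; rewrite -e; apply: HN. Qed.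

Lemma dexpc x : d (expB F c * x) = expB F c * (d x - br c x).
Proof.
set e := fun m => ((m`!%:R : K)^-1 *: c ^+ m).
have ne : null e := graded_null e_graded.
set y := u * x - br c x; set z := u * x.
set Bs := fun m => ((m`!%:R : K)^-1 *: ((c ^+ m.-1 * y) *+ m)).
set Cs := fun m => ((m`!%:R : K)^-1 *: ((c ^+ m.-2 * z) *+ (m * m.-1))).
have eB : forall m, Bs m.+1 = e m * y.
  move=> m; rewrite /Bs /e -scaler_nat scalerA sc3 /=.
  by rewrite -scalerAl.
have eC : forall m, Cs m.+2 = e m * z.
  move=> m; rewrite /Cs /e -scaler_nat scalerA /= natrM mulrA sc3 sc3.
  by rewrite -scalerAl.
have nB : null Bs.
  by apply: null_unshift; apply: null_ext (null_mulr y ne) => m; rewrite eB.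
have nC : null Cs.
  apply: null_unshift; apply: null_unshift.
  by apply: null_ext (null_mulr z ne) => m; rewrite eC.
rewrite /expB -/e S_mulr // (S_map (d_add HB) (F_d HB)); last exact: null_mulr.
rewrite (S_ext (u := fun m => (e m * d x + Bs m) + - Cs m)); last first.
  move=> m; rewrite /e -scalerAl (d_scale HB) d_cmx scalerBr scalerDr scalerAl.
  by [].
rewrite S_add; last 2 first.
- by apply: null_add => //; apply: null_mulr.
- by move=> i; case: (nC i) => N HN; exists N => n nN; apply: F_opp; apply: HN.
rewrite S_add //; last exact: null_mulr.
rewrite S_opp // (S_shift nB) {1}/Bs mulr0n scaler0 add0r (S_ext eB).
rewrite (S_shift nC) (S_shift (null_shift nC)) {1}/Cs {1}/Cs /= !muln0 !mulr0n !scaler0 !add0r.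
rewrite (S_ext eC) -!S_mulr // -mulrDr -mulrBr /y /z.
by rewrite addrA addrAC addrK.
Qed.

End R.

End Proof9.


Theorem mainTheorem9 (K : fieldType) (B : algType K)
    (G : bool -> B -> Prop) (F : nat -> B -> Prop)
    (br : B -> B -> B) (d : B -> B)
    (charK : [pchar K] =i pred0)
    (HB : complete_filtered_BV G F br d)
    (r : B) (r_odd : G true r) (r_F1 : F 1%N r) :
  forall a : B, d (T_exp F br d r a) = T_exp F br d r (d a).
Proof.
move=> a; rewrite /T_exp (dexpc HB r_odd r_F1 charK) (dE HB r_odd r_F1 charK).
by rewrite addrK.
Qed.
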